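(* Let $R$ be a commutative Noetherian ring with unity. Any two distinct associated primes of $R$ (viewed as vertices of $\Gamma_E(R)$) are joined by an edge in $\Gamma_E(R)$. Furthermore, every vertex $[v]$ of $\Gamma_E(R)$ is either an associated prime or is adjacent to a vertex $[z]$ such that $\operatorname{ann}(z)$ is an associated prime which is a maximal element of $\mathfrak F=\{\operatorname{ann}(x)\mid 0\neq x\in R\}$.
   Context: For $x,y\in R$ write $x\sim y$ iff $\operatorname{ann}(x)=\operatorname{ann}(y)$; this is an equivalence relation, $[x]$ denotes the class of $x$, and $[x]\cdot[y]=[xy]$ is well defined. Let $Z^*(R)$ be the set of nonzero zero divisors of $R$. The graph $\Gamma_E(R)$ is the simple graph whose vertices are the classes $[x]$ with $x\in Z^*(R)$, two distinct vertices $[x],[y]$ being adjacent iff $xy=0$. A prime ideal $\mathfrak p$ is an associated prime of $R$ if $\mathfrak p=\operatorname{ann}(y)$ for some $y\in R$; the map $\mathfrak p=\operatorname{ann}(y)\mapsto[y]$ injects the set $\operatorname{Ass}(R)$ of associated primes into the vertex set, and a vertex $[y]$ is called an associated prime if $\operatorname{ann}(y)$ is a prime ideal. *)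

(* Defs.v *)
From mathcomp Require Import all_boot all_order all_algebra.
Set Implicit Arguments. Unset Strict Implicit. Unset Printing Implicit Defensive.
Import GRing.Theory.
Local Open Scope ring_scope.

Section Defs.
Variable R : comNzRingType.

Definition subset_of (I J : R -> Prop) : Prop := forall x, I x -> J x.
Definition same_set (I J : R -> Prop) : Prop := forall x, I x <-> J x.

Definition is_ideal (I : R -> Prop) : Prop :=
  [/\ I 0, (forall x y, I x -> I y -> I (x + y)) &
      (forall r x, I x -> I (r * x))].

Definition is_prime_ideal (P : R -> Prop) : Prop :=
  [/\ is_ideal P, ~ P 1 & (forall a b, P (a * b) -> P a \/ P b)].

Definition noetherian : Prop :=
  forall I : nat -> (R -> Prop), (forall n, is_ideal (I n)) ->
    (forall n, subset_of (I n) (I n.+1)) ->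
    exists N : nat, forall n, (N <= n)%N -> same_set (I n) (I N).

Definition ann (x : R) : R -> Prop := fun y => x * y = 0.

(* x ~ y iff ann x = ann y ; [x] = [y] in the vertex set *)
Definition ann_equiv (x y : R) : Prop := same_set (ann x) (ann y).

Definition nz_zero_divisor (x : R) : Prop := x <> 0 /\ exists y, y <> 0 /\ x * y = 0.

Definition assoc_prime_vertex (y : R) : Prop := is_prime_ideal (ann y).

Definition maximal_in_F (z : R) : Prop :=
  z <> 0 /\ forall x, x <> 0 -> subset_of (ann z) (ann x) -> same_set (ann x) (ann z).

Definition adjacent (x y : R) : Prop := ~ ann_equiv x y /\ x * y = 0.
End Defs.

(* Main.v *)
Require Import Defs.
From mathcomp Require Import all_boot all_order all_algebra.
From mathcomp Require Import ring.
From Stdlib Require Import Classical ClassicalEpsilon.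
Import GRing.Theory.
Local Open Scope ring_scope.

Section Aux.
Variable R : comNzRingType.

Lemma ann_ideal (x : R) : is_ideal (ann x).
Proof.
rewrite /is_ideal /ann; split.
- by rewrite mulr0.
- by move=> a b Ha Hb; rewrite mulrDr Ha Hb addr0.
- by move=> r a Ha; rewrite mulrCA Ha mulr0.
Qed.

Lemma max_prime (z : R) : maximal_in_F z -> assoc_prime_vertex z.
Proof.
move=> [z0 Hm]; split; first exact: ann_ideal.
- by rewrite /ann mulr1.
- move=> a b Hab; case: (classic (ann z a)) => Ha; first by left.
  right.
  have za0 : z * a <> 0 by [].
  have Hs : subset_of (ann z) (ann (z * a)).
    by move=> r; rewrite /ann => Hr; rewrite mulrAC Hr mul0r.
  have := (Hm _ za0 Hs b).1; apply.
  by rewrite /ann -mulrA.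
Qed.

Lemma exists_max (HR : noetherian R) (w : R) : w <> 0 ->
  exists z, maximal_in_F z /\ subset_of (ann w) (ann z).
Proof.
move=> w0; apply: NNPP => Hn.
have H : forall x, x <> 0 -> subset_of (ann w) (ann x) ->
   exists x', [/\ x' <> 0, subset_of (ann x) (ann x') & ~ same_set (ann x') (ann x)].
  move=> x x0 Hx; apply: NNPP => Hno; apply: Hn; exists x; split => //.
  split => // y y0 Hy; apply: NNPP => Hs; apply: Hno; by exists y.
pose g (x : R) := epsilon (inhabits 0)
   (fun x' => [/\ x' <> 0, subset_of (ann x) (ann x') & ~ same_set (ann x') (ann x)]).
have Hg : forall x, x <> 0 -> subset_of (ann w) (ann x) ->
   [/\ g x <> 0, subset_of (ann x) (ann (g x)) & ~ same_set (ann (g x)) (ann x)].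
  by move=> x x0 Hx; apply: (epsilon_spec (inhabits 0) _ (H x x0 Hx)).
have Inv : forall n, iter n g w <> 0 /\ subset_of (ann w) (ann (iter n g w)).
  elim=> [|n [IH1 IH2]] /=; first by split.
  have [A B _] := Hg _ IH1 IH2; split => // r Hr; exact/B/IH2.
have [N HN] := HR (fun n => ann (iter n g w)) (fun n => ann_ideal _)
  (fun n => let: conj a b := Inv n in let: And3 _ B _ := Hg _ a b in B).
have [a b] := Inv N; have [_ _ C] := Hg _ a b.
by apply: C; apply: (HN N.+1).
Qed.
End Aux.

Theorem lemma1p2 (R : comNzRingType) (HR : noetherian R) :
  (forall y1 y2 : R,
      nz_zero_divisor y1 -> nz_zero_divisor y2 ->
      assoc_prime_vertex y1 -> assoc_prime_vertex y2 ->
      ~ ann_equiv y1 y2 -> adjacent y1 y2)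
  /\
  (forall v : R, nz_zero_divisor v ->
      assoc_prime_vertex v \/
      exists z : R, [/\ nz_zero_divisor z, adjacent v z,
                        assoc_prime_vertex z & maximal_in_F z]).
Proof.
split.
- move=> y1 y2 _ _ [_ _ P1] [_ _ P2] Hne; split => //.
  apply: NNPP => Hy; apply: Hne => r; rewrite /ann.
  have E1 : forall s, y1 * y2 * s = 0 <-> y1 * s = 0.
    move=> s; split => Hs.
    + have : ann y1 (s * y2) by rewrite /ann mulrA mulrAC.
      by case/P1 => // Hc; exfalso; apply: Hy.
    + by rewrite mulrAC Hs mul0r.
  have E2 : forall s, y1 * y2 * s = 0 <-> y2 * s = 0.
    move=> s; split => Hs.
    + have : ann y2 (s * y1).
        by rewrite /ann; rewrite -Hs; ring.
      case/P2 => // Hc; exfalso; apply: Hy; by rewrite mulrC.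
    + by rewrite -mulrA Hs mulr0.
  by rewrite -E1 E2.
- move=> v [v0 [w [w0 vw]]].
  have [z [Hz Hsub]] := @exists_max R HR w w0.
  have vz : v * z = 0 by rewrite mulrC; apply: Hsub; rewrite /ann mulrC.
  have Pz := @max_prime R z Hz.
  case: (classic (ann_equiv v z)) => He.
  + left; case: Pz => [I N1 Pr]; split.
    * case: I => [a b c]; split; first by apply/He.
      - by move=> x y /He Hx /He Hy; apply/He; apply: b.
      - by move=> r x /He Hx; apply/He; apply: c.
    * by move=> /He.
    * by move=> a b /He /Pr [] /He; [left|right].
  + right; exists z; split => //.
    split; first by case: Hz.
    by exists v; split => //; rewrite mulrC.
Qed.
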